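(* For all positive integers $m\le k$ there exists a Boolean function $g:\{0,1\}^n\to\{0,1\}$ (for some $n$) with $s_0(g)=m$, $bs_0(g)=k$ and \[ C_1(g)=\left\lfloor \frac{3\lceil k/m\rceil}{2}\right\rfloor+1. \]
   Context: For $x\in\{0,1\}^n$ and $S\subseteq[n]$, $x^S$ denotes $x$ with all bits in $S$ flipped. $s(g,x)$ is the number of $i$ with $g(x)\neq g(x^{\{i\}})$ and $s_0(g)=\max\{s(g,x): g(x)=0\}$. $bs(g,x)$ is the maximum number of pairwise disjoint sets $B_1,\dots,B_b\subseteq[n]$ with $g(x^{B_j})\neq g(x)$ for all $j$, and $bs_0(g)=\max\{bs(g,x): g(x)=0\}$. A 1-certificate is a partial assignment $c:S\to\{0,1\}$ such that $g$ equals 1 on every input agreeing with $c$ on $S$; $C(g,x)$ is the minimum $|S|$ over certificates (partial assignments on which $g$ is constant) agreeing with $x$, and $C_1(g)=\max\{C(g,x): g(x)=1\}$. *)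

(* Defs.v *)
From mathcomp Require Import all_boot.
Set Implicit Arguments. Unset Strict Implicit. Unset Printing Implicit Defensive.

Definition input (n : nat) := {ffun 'I_n -> bool}.

Definition flip n (x : input n) (S : {set 'I_n}) : input n :=
  [ffun i => if i \in S then ~~ x i else x i].

Definition sens n (g : input n -> bool) (x : input n) : nat :=
  #|[set i : 'I_n | g x != g (flip x [set i])]|.

(* s_0(g) = max over 0-inputs (0 if there are none) *)
Definition s0 n (g : input n -> bool) : nat :=
  \max_(x : input n | ~~ g x) sens g x.

Definition sens_blocks n (g : input n -> bool) (x : input n)
    (P : {set {set 'I_n}}) : bool :=
  [&& trivIset P, set0 \notin P & [forall B in P, g (flip x B) != g x]].

Definition bsens n (g : input n -> bool) (x : input n) : nat :=
  \max_(P : {set {set 'I_n}} | sens_blocks g x P) #|P|.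

Definition bs0 n (g : input n -> bool) : nat :=
  \max_(x : input n | ~~ g x) bsens g x.

Definition is_cert n (g : input n -> bool) (x : input n) (S : {set 'I_n}) : bool :=
  [forall y : input n, [forall i in S, y i == x i] ==> (g y == g x)].

(* C(g,x) : minimal size of a certificate agreeing with x
   (S = whole set is always one, so the bound n is attained or beaten) *)
Definition cert n (g : input n -> bool) (x : input n) : nat :=
  \big[minn/n]_(S : {set 'I_n} | is_cert g x S) #|S|.

Definition C1 n (g : input n -> bool) : nat :=
  \max_(x : input n | g x) cert g x.

(* Main.v *)
Require Import Defs.
From mathcomp Require Import all_boot.
From mathcomp Require Import zify.
Set Implicit Arguments. Unset Strict Implicit. Unset Printing Implicit Defensive.

Lemma flip1E n (x : input n) (i v : 'I_n) :
  flip x [set i] v = (if val v == val i then ~~ x v else x v).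
Proof. by rewrite /flip ffunE in_set1. Qed.

Lemma bsens_le_cert n (g : input n -> bool) x S :
  is_cert g x S -> bsens g x <= #|S|.
Proof.
move=> /forallP hS; apply/bigmax_leqP => P /and3P [tP P0 /forall_inP hP].
have hBS : forall B, B \in P -> exists i, i \in B :&: S.
  move=> B BP; case: (set_0Vmem (B :&: S)) => [E|]; last by case=> i; exists i.
  have := hP B BP; move: (hS (flip x B)) => /implyP H; rewrite H ?eqxx //.
  apply/forall_inP => i iS; rewrite /flip ffunE; case: ifP => // iB.
  have : i \in B :&: S by rewrite inE iB.
  by rewrite E inE.
pose f B := [pick i in B :&: S].
have finj : {in P &, injective f}.
  move=> B B' BP B'P; rewrite /f.
  case: pickP => [i iB|]; last by case: (hBS B BP) => i0 Hi /(_ i0); rewrite Hi.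
  case: pickP => [j jB' E|]; last by case: (hBS B' B'P) => i0 Hi /(_ i0); rewrite Hi.
  case: E iB => -> iB; apply/eqP; apply/negPn/negP => ne.
  move/trivIsetP: tP => /(_ B B' BP B'P ne) /disjoint_setI0 D.
  have : j \in B :&: B' by rewrite inE; move: iB jB'; rewrite !inE => /andP[-> _] /andP[-> _].
  by rewrite D inE.
rewrite -(card_in_imset finj).
have -> : #|S| = #|[set Some i | i in S]| by rewrite card_imset //; exact: Some_inj.
apply: subset_leq_card; apply/subsetP => o /imsetP [B BP ->].
rewrite /f; case: pickP => [i|]; last by case: (hBS B BP) => i0 Hi /(_ i0); rewrite Hi.
by rewrite inE => /andP [_ iS]; apply: imset_f.
Qed.

Lemma sens_in_cert n (g : input n -> bool) x S i :
  is_cert g x S -> g x != g (flip x [set i]) -> i \in S.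
Proof.
move=> /forallP /(_ (flip x [set i])) /implyP H; apply: contraR => iS.
rewrite eq_sym H //; apply/forall_inP => j jS.
rewrite flip1E; case: ifP => [/eqP/ord_inj E|//].
by move: iS; rewrite -E jS.
Qed.

Lemma bigmin_le (I : eqType) (r : seq I) (P : pred I) (F : I -> nat) n0 i0 :
  i0 \in r -> P i0 -> \big[minn/n0]_(i <- r | P i) F i <= F i0.
Proof.
elim: r => // a r IH; rewrite inE big_cons => /orP [/eqP <- ->|ir Pi].
  exact: geq_minl.
case: ifP => _; last exact: IH.
by rewrite geq_min IH ?orbT.
Qed.

Lemma cert_le n (g : input n -> bool) x S : is_cert g x S -> cert g x <= #|S|.
Proof. by move=> H; rewrite /cert; apply: bigmin_le; rewrite ?mem_index_enum. Qed.

Lemma cert_ge n (g : input n -> bool) x V :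
  (forall S, is_cert g x S -> V <= #|S|) -> V <= n -> V <= cert g x.
Proof.
move=> H Vn; rewrite /cert; apply: (big_ind (fun a => V <= a)) => //.
by move=> a b Ha Hb; rewrite leq_min Ha Hb.
Qed.

Lemma card_ge n (A : {set 'I_n}) V (F : nat -> nat) :
  (forall i j, i < V -> j < V -> F i = F j -> i = j) ->
  (forall j, j < V -> exists2 v : 'I_n, v \in A & val v = F j) ->
  V <= #|A|.
Proof.
move=> Finj FA.
have U : uniq [seq F j | j <- iota 0 V].
  rewrite map_inj_in_uniq ?iota_uniq // => i j; rewrite !mem_iota !add0n; exact: Finj.
rewrite -[X in X <= _](size_iota 0) -(size_map F) cardE -(size_map val).
apply: uniq_leq_size U _ => y /mapP [j]; rewrite mem_iota add0n => /FA [v vA <-] ->.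
by apply: map_f; rewrite mem_enum.
Qed.

Lemma card_le n (A : {set 'I_n}) V (G : nat -> nat) :
  (forall u v : 'I_n, u \in A -> v \in A -> G u = G v -> u = v) ->
  (forall u : 'I_n, u \in A -> G u < V) ->
  #|A| <= V.
Proof.
move=> Ginj GV.
have U : uniq [seq G (val u) | u <- enum A].
  rewrite map_inj_in_uniq ?enum_uniq // => u v; rewrite !mem_enum; exact: Ginj.
rewrite cardE -(size_map (fun u : 'I_n => G (val u))) -(size_iota 0 V).
apply: uniq_leq_size U _ => y /mapP [u]; rewrite mem_enum => uA ->.
by rewrite mem_iota add0n GV.
Qed.

Unset Implicit Arguments.

Definition tt (m k : nat) := (k + m - 1) %/ m.
Definition dist t r s := (s + t - r) %% t.
Definition Pos (p v : nat) : bool := v %/ 2 == p.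
Definition Neg m k (p v : nat) : bool :=
  [&& v %/ 2 != p, (v %/ 2) %% m == p %% m &
      (v %% 2 == 0) || (dist (tt m k) (p %/ m) ((v %/ 2) %/ m) <= tt m k %/ 2)].
Definition supp m k p v := Pos p v || Neg m k p v.
Definition sat m k (p : nat) (x : input (2*k)) :=
  [forall v : 'I_(2*k), supp m k p v ==> (x v == Pos p v)].
Definition G m k (x : input (2*k)) := [exists p : 'I_k, sat m k p x].

Lemma k_le m k : 0 < m -> k <= tt m k * m.
Proof.
move=> hm; rewrite /tt; have := divn_eq (k + m - 1) m.
have := ltn_pmod (k + m - 1) hm; lia.
Qed.

Lemma lt_k m k : 0 < m -> tt m k * m < k + m.
Proof. move=> hm; rewrite /tt; have := leq_divM (k + m - 1) m; lia. Qed.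

Lemma tt_ge1 m k : 0 < m -> m <= k -> 0 < tt m k.
Proof. move=> hm hmk; have := k_le m k hm; case: (tt m k) => //; lia. Qed.

Lemma idx_lt m k q : 0 < m -> q < k -> q %/ m < tt m k.
Proof. move=> hm qk; rewrite ltn_divLR //; have := k_le m k hm; lia. Qed.

Lemma same_q m q q' : q %% m = q' %% m -> q %/ m = q' %/ m -> q = q'.
Proof. by move=> E1 E2; rewrite (divn_eq q m) (divn_eq q' m) E1 E2. Qed.

Lemma distE t r s : r < t -> s < t ->
  dist t r s = if r <= s then s - r else s + t - r.
Proof.
move=> rt st; rewrite /dist; case: ifP => rs.
  have -> : s + t - r = (s - r) + t by lia.
  by rewrite modnDr modn_small //; lia.
by rewrite modn_small //; lia.
Qed.

Lemma satP m k p (x : input (2*k)) :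
  reflect (forall v : 'I_(2*k), supp m k p v -> x v = Pos p v) (sat m k p x).
Proof.
apply: (iffP forallP) => H v.
  by move=> sv; move: (H v); rewrite sv => /eqP.
by apply/implyP => /H ->.
Qed.

Lemma supp_grp m k p v : supp m k p v -> (v %/ 2) %% m = p %% m.
Proof. by rewrite /supp /Pos /Neg => /orP [/eqP -> | /and3P [_ /eqP -> _]]. Qed.

Lemma sat_flipE m k p (x : input (2*k)) (i : 'I_(2*k)) :
  sat m k p (flip x [set i]) -> forall v : 'I_(2*k), supp m k p v ->
  x v = if val v == val i then ~~ Pos p v else Pos p v.
Proof.
move/satP => H v sv; move: (H v sv); rewrite flip1E.
by case: ifP => // _ <-; rewrite negbK.
Qed.

Lemma sat_flip_supp m k p (x : input (2*k)) (i : 'I_(2*k)) :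
  sat m k p (flip x [set i]) -> ~~ sat m k p x -> supp m k p i.
Proof.
move=> H; apply: contraR => ni; apply/satP => v sv.
rewrite (sat_flipE m k p x i H v sv); case: eqP => // E.
by move: ni; rewrite -E sv.
Qed.

Lemma key_dir m k p q (x : input (2*k)) (i j : 'I_(2*k)) :
  p < k -> q < k -> p != q -> p %% m = q %% m ->
  dist (tt m k) (p %/ m) (q %/ m) <= tt m k %/ 2 ->
  sat m k p (flip x [set i]) -> sat m k q (flip x [set j]) -> False.
Proof.
move=> pk qk pq pqm D Hp Hq.
have o1 : 2*q < 2*k by lia.
have o2 : 2*q+1 < 2*k by lia.
have o3 : 2*p < 2*k by lia.
have E1 : (2*q) %/ 2 = q by lia.
have E2 : (2*q+1) %/ 2 = q by lia.
have E3 : (2*p) %/ 2 = p by lia.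
have M1 : (2*q) %% 2 = 0 by lia.
have M3 : (2*p) %% 2 = 0 by lia.
have qp : q != p by rewrite eq_sym.
have ifs : forall (b c y u w : bool), y = (if b then ~~ u else u) ->
    y = (if c then ~~ w else w) -> u != w -> b || c.
  by move=> [] [] [] [] [].
have d1 := ifs _ _ _ _ _ (sat_flipE m k p x i Hp (Ordinal o1) _) (sat_flipE m k q x j Hq (Ordinal o1) _).
have d2 := ifs _ _ _ _ _ (sat_flipE m k p x i Hp (Ordinal o2) _) (sat_flipE m k q x j Hq (Ordinal o2) _).
have d3 := ifs _ _ _ _ _ (sat_flipE m k p x i Hp (Ordinal o3) _) (sat_flipE m k q x j Hq (Ordinal o3) _).
move: d1 d2 d3; rewrite /supp /Pos /Neg /= E1 E2 E3 M1 M3 pqm D (negbTE pq) (negbTE qp) !eqxx /= ?orbT.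
move=> /(_ isT isT isT) d1 /(_ isT isT isT) d2 /(_ isT isT isT) d3.
move: pq; lia.
Qed.

Lemma dist_or m k p q : 0 < m -> p < k -> q < k -> p != q -> p %% m = q %% m ->
  (dist (tt m k) (p %/ m) (q %/ m) <= tt m k %/ 2) ||
  (dist (tt m k) (q %/ m) (p %/ m) <= tt m k %/ 2).
Proof.
move=> hm pk qk pq pqm.
have rs : p %/ m != q %/ m.
  by apply/negP => /eqP E; move/negP: pq; apply; apply/eqP; exact: (same_q m p q pqm E).
have rt := idx_lt m k p hm pk; have st := idx_lt m k q hm qk.
rewrite !distE //; case: ifP; case: ifP; lia.
Qed.

Lemma sens_inj m k (x : input (2*k)) (i j : 'I_(2*k)) : 0 < m ->
  ~~ G m k x -> G m k (flip x [set i]) -> G m k (flip x [set j]) ->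
  (i %/ 2) %% m = (j %/ 2) %% m -> i = j.
Proof.
move=> hm nG /existsP [p Hp] /existsP [q Hq] ij.
have ns : forall r : 'I_k, ~~ sat m k r x.
  by move=> r; apply/negP => s; move/negP: nG; apply; apply/existsP; exists r.
have si := sat_flip_supp m k p x i Hp (ns p).
have sj := sat_flip_supp m k q x j Hq (ns q).
have pqm : p %% m = q %% m by rewrite -(supp_grp m k p i si) -(supp_grp m k q j sj).
case: (boolP (val p == val q)) => [/eqP E|pq].
  rewrite -E in Hq sj.
  move: (sat_flipE m k p x i Hp j sj) (sat_flipE m k p x j Hq j sj).
  rewrite eqxx; case: (val j =P val i) => [E2 _ _|_ -> /eqP]; first by apply: ord_inj.
  by rewrite /Pos; case: eqP.
case/orP: (dist_or m k p q hm (ltn_ord p) (ltn_ord q) pq pqm) => D.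
  by case: (key_dir m k p q x i j (ltn_ord p) (ltn_ord q) pq pqm D Hp Hq).
by case: (key_dir m k q p x j i (ltn_ord q) (ltn_ord p) (negbT (introF eqP (fun E => (negP pq) (introT eqP (esym E))))) (esym pqm) D Hq Hp).
Qed.

Lemma s0_eq m k : 0 < m -> m <= k -> s0 (G m k) = m.
Proof.
move=> hm hmk; apply/eqP; rewrite eqn_leq; apply/andP; split.
  apply/bigmax_leqP => x nx; rewrite /sens.
  apply: (card_le (V:=m) (G:=fun v => (v %/ 2) %% m)).
    move=> u v; rewrite !inE (negbTE nx) /= !negbK => Gu Gv.
    exact: (sens_inj m k x u v hm nx Gu Gv).
  by move=> u _; rewrite ltn_mod.
pose x0 : input (2*k) := [ffun v : 'I_(2*k) => odd v && (v %/ 2 < m)].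
have nx0 : ~~ G m k x0.
  apply/existsP => [[p /satP Hp]].
  have o : 2 * p < 2 * k by have := ltn_ord p; lia.
  move: (Hp (Ordinal o)); rewrite /supp /Pos /x0 ffunE /=.
  have -> : (2 * p) %/ 2 = p by lia.
  by rewrite eqxx /= oddM /= => /(_ isT).
rewrite /s0; apply: (leq_trans _ (@leq_bigmax_cond _ (fun x => ~~ G m k x) (sens (G m k)) x0 nx0)).
rewrite /sens.
apply: (card_ge (V:=m) (F:=fun j => 2 * j)) => [i j _ _|j jm]; first lia.
have o : 2 * j < 2 * k by lia.
exists (Ordinal o) => //; rewrite inE (negbTE nx0) /= negbK; apply/existsP.
have jk : j < k by lia.
exists (Ordinal jk); apply/satP => v; rewrite flip1E /x0 ffunE /=.
case: eqP => [-> _|ne]; first by rewrite /Pos oddM /=; apply/esym/eqP; lia.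
rewrite /supp /Pos /Neg => /orP [/eqP E|/and3P [ne2 /eqP g _]].
  rewrite E jm andbT eqxx; lia.
rewrite (negbTE ne2); case: (ltnP (v %/ 2) m) => lt; last by rewrite andbF.
by move: g; rewrite !modn_small // => E; rewrite E eqxx in ne2.
Qed.

Lemma bs0_eq m k : 0 < m -> m <= k -> bs0 (G m k) = k.
Proof.
move=> hm hmk; have k0 : 0 < 2 * k by lia.
apply/eqP; rewrite eqn_leq; apply/andP; split.
  apply/bigmax_leqP => x nx.
  pose d : 'I_(2*k) := Ordinal k0.
  pose f (p : 'I_k) := odflt d [pick v : 'I_(2*k) | supp m k p v && (x v != Pos p v)].
  have fP : forall p : 'I_k, supp m k p (f p) && (x (f p) != Pos p (f p)).
    move=> p; rewrite /f; case: pickP => [v //|none].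
    have : sat m k p x.
      apply/satP => v sv; move: (none v); rewrite sv /= => /negbT; rewrite negbK.
      by move/eqP.
    by move=> sp; move/negP: nx; case; apply/existsP; exists p.
  apply: leq_trans (bsens_le_cert (S := f @: [set: 'I_k]) _) _.
    apply/forallP => y; apply/implyP => /forall_inP Hy.
    rewrite (negbTE nx); apply/eqP/negbTE/negP => /existsP [p /satP Hp].
    case/andP: (fP p) => sp; rewrite -(eqP (Hy (f p) (imset_f _ (in_setT p)))).
    by rewrite (Hp _ sp) eqxx.
  by apply: leq_trans (leq_imset_card _ _) _; rewrite cardsT card_ord.
pose x : input (2*k) := [ffun _ => false].
have nx : ~~ G m k x.
  apply/existsP => [[p /satP Hp]].
  have o : 2 * p < 2 * k by have := ltn_ord p; lia.
  move: (Hp (Ordinal o)); rewrite /supp /Pos /x ffunE /=.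
  have -> : (2 * p) %/ 2 = p by lia.
  by rewrite eqxx /= => /(_ isT).
pose Pp (p : 'I_k) := [set v : 'I_(2*k) | v %/ 2 == p].
have Pin : forall p : 'I_k, exists2 v, v \in Pp p & v %/ 2 = p.
  move=> p; have o : 2 * p < 2 * k by have := ltn_ord p; lia.
  by exists (Ordinal o); rewrite /Pp ?inE /=; lia.
have Pinj : injective Pp.
  move=> p q E; case: (Pin p) => v; rewrite E /Pp inE => /eqP E1 E2.
  by apply: ord_inj; rewrite -E1 -E2.
rewrite /bs0; apply: (leq_trans _ (@leq_bigmax_cond _ (fun x => ~~ G m k x) (bsens (G m k)) x nx)).
rewrite /bsens.
have sb : sens_blocks (G m k) x (Pp @: [set: 'I_k]).
  apply/and3P; split.
  - apply/trivIsetP => A B /imsetP [p _ ->] /imsetP [q _ ->] ne.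
    rewrite -setI_eq0; apply/eqP/setP => v; rewrite !inE; apply/negP => /andP [/eqP E1 /eqP E2].
    by move/negP: ne; apply; apply/eqP; congr Pp; apply: ord_inj; rewrite -E1 -E2.
  - apply/negP => /imsetP [p _ E]; case: (Pin p) => v vP _.
    by move: vP; rewrite -E /Pp in_set0.
  - apply/forall_inP => B /imsetP [p _ ->]; rewrite (negbTE nx) eqbF_neg negbK.
    apply/existsP; exists p; apply/satP => v _.
    by rewrite /flip /x !ffunE inE /Pos; case: (v %/ 2 == p).
apply: leq_trans (leq_bigmax_cond _ sb); rewrite card_imset // cardsT card_ord //.
Qed.

Definition code t r s e := if e == 0 then dist t r s + 1 else dist t r s + t.

Lemma code_inj t r su sv eu ev : r < t -> su < t -> sv < t -> su != r -> sv != r ->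
  eu < 2 -> ev < 2 -> (eu = 1 -> dist t r su <= t %/ 2) -> (ev = 1 -> dist t r sv <= t %/ 2) ->
  code t r su eu = code t r sv ev -> su = sv /\ eu = ev.
Proof.
move=> rt ut vt ur vr e1 e2 D1 D2; rewrite /code.
move: D1 D2; rewrite !distE //.
case: (eu) e1 => [|[|//]] _; case: (ev) e2 => [|[|//]] _ /=;
  case: ifP; case: ifP; lia.
Qed.

Lemma code_rng t r s e : r < t -> s < t -> s != r -> e < 2 ->
  (e = 1 -> dist t r s <= t %/ 2) -> 2 <= code t r s e < t + t %/ 2 + 1.
Proof.
move=> rt st sr e2; rewrite /code !distE //.
case: (e) e2 => [|[|//]] _ /=; case: ifP; lia.
Qed.

Arguments code_rng [t r s e].
Arguments code_inj [t r su sv eu ev].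

Lemma neg_facts m k p v : 0 < m -> p < k -> v < 2 * k -> Neg m k p v ->
  [/\ (v %/ 2) %% m = p %% m, (v %/ 2) %/ m != p %/ m, (v %/ 2) %/ m < tt m k,
      p %/ m < tt m k &
      (v %% 2 = 1 -> dist (tt m k) (p %/ m) ((v %/ 2) %/ m) <= tt m k %/ 2)].
Proof.
move=> hm pk vk /and3P [ne /eqP g D]; split => //.
- by apply/negP => /eqP E; move/negP: ne; apply; apply/eqP; exact: (same_q m _ _ g E).
- apply: idx_lt => //; lia.
- exact: idx_lt.
- by move=> o; move: D; rewrite o.
Qed.

Lemma C1_le m k : 0 < m -> m <= k -> C1 (G m k) <= tt m k + tt m k %/ 2 + 1.
Proof.
move=> hm hmk; apply/bigmax_leqP => x /existsP [p sp].
set S := [set v : 'I_(2*k) | supp m k p v].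
have cS : is_cert (G m k) x S.
  apply/forallP => y; apply/implyP => /forall_inP Hy.
  have -> : G m k y.
    apply/existsP; exists p; apply/satP => v sv.
    by rewrite (eqP (Hy v _)) ?inE //; move/satP: sp => ->.
  by rewrite eq_sym; apply/eqP/existsP; exists p.
apply: leq_trans (cert_le cS) _.
have t1 := tt_ge1 m k hm hmk.
pose Gm (v : nat) := if v %/ 2 == p then v %% 2
  else code (tt m k) (p %/ m) ((v %/ 2) %/ m) (v %% 2).
apply: (card_le (V := tt m k + tt m k %/ 2 + 1) (G := Gm)).
  move=> u v; rewrite !inE /supp /Gm.
  case: (boolP (Pos p u)) => [Pu _|Pu /= Nu]; case: (boolP (Pos p v)) => [Pv _|Pv /= Nv].
  - move: Pu Pv; rewrite /Pos => /eqP Pu /eqP Pv; rewrite Pu Pv eqxx => E.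
    apply: ord_inj; lia.
  - move: Pu Pv; rewrite /Pos => /eqP Pu /negbTE Pv; rewrite Pu eqxx Pv => E.
    case: (neg_facts m k p v hm (ltn_ord p) (ltn_ord v) Nv) => _ ne st rt D.
    have := code_rng rt st ne (ltn_pmod v (isT : 0 < 2)) D.
    have := ltn_pmod u (isT : 0 < 2); lia.
  - move: Pu Pv; rewrite /Pos => /negbTE Pu /eqP Pv; rewrite Pv eqxx Pu => E.
    case: (neg_facts m k p u hm (ltn_ord p) (ltn_ord u) Nu) => _ ne st rt D.
    have := code_rng rt st ne (ltn_pmod u (isT : 0 < 2)) D.
    have := ltn_pmod v (isT : 0 < 2); lia.
  - move: Pu Pv; rewrite /Pos => /negbTE Pu /negbTE Pv; rewrite Pu Pv => E.
    case: (neg_facts m k p u hm (ltn_ord p) (ltn_ord u) Nu) => gu neu su rt Du.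
    case: (neg_facts m k p v hm (ltn_ord p) (ltn_ord v) Nv) => gv nev sv _ Dv.
    case: (code_inj rt su sv neu nev (ltn_pmod u (isT : 0 < 2)) (ltn_pmod v (isT : 0 < 2)) Du Dv E).
    move=> E1 E2; have E3 : u %/ 2 = v %/ 2 by apply: (same_q m); rewrite ?gu ?gv.
    apply: ord_inj; lia.
move=> u; rewrite inE /supp /Gm; case: (boolP (Pos p u)) => [Pu _|Pu /= Nu].
  rewrite /Pos in Pu; rewrite Pu; have := ltn_pmod u (isT : 0 < 2); lia.
rewrite /Pos in Pu; rewrite (negbTE Pu).
case: (neg_facts m k p u hm (ltn_ord p) (ltn_ord u) Nu) => _ ne st rt D.
by case/andP: (code_rng rt st ne (ltn_pmod u (isT : 0 < 2)) D).
Qed.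

Lemma C1_ge m k : 0 < m -> m <= k -> tt m k + tt m k %/ 2 + 1 <= C1 (G m k).
Proof.
move=> hm hmk; have k0 : 0 < k by lia.
have t1 := tt_ge1 m k hm hmk; have tk := lt_k m k hm; have kt := k_le m k hm.
have tlek : tt m k <= k by nia.
pose x : input (2*k) := [ffun v : 'I_(2*k) => Pos 0 v].
have Gx : G m k x.
  by apply/existsP; exists (Ordinal k0); apply/satP => v _; rewrite ffunE.
have sens : forall v : 'I_(2*k), supp m k 0 v -> G m k x != G m k (flip x [set v]).
  move=> v sv; rewrite Gx eq_sym eqb_id; apply/existsP => [[q /satP Hq]].
  case: (eqVneq (val q) 0) => [q0|qn0].
    move: (Hq v); rewrite q0 flip1E eqxx /x ffunE => /(_ sv).
    by case: (Pos 0 v).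
  have o1 : 2 * q < 2 * k by have := ltn_ord q; lia.
  have o2 : 2 * q + 1 < 2 * k by have := ltn_ord q; lia.
  move: (Hq (Ordinal o1)) (Hq (Ordinal o2)); rewrite !flip1E /x !ffunE /supp /Pos /=.
  have -> : (2 * q) %/ 2 = q by lia.
  have -> : (2 * q + 1) %/ 2 = q by lia.
  rewrite eqxx (negbTE qn0) /=.
  case: eqP => [E1|_]; case: eqP => [E2|_] //=; try lia.
rewrite /C1; apply: (leq_trans _ (@leq_bigmax_cond _ (fun x => G m k x) (cert (G m k)) x Gx)).
apply: cert_ge; last by lia.
move=> S cS.
apply: (@leq_trans #|[set v : 'I_(2*k) | supp m k 0 v]|); last first.
  apply: subset_leq_card; apply/subsetP => v; rewrite inE => sv.
  exact: (sens_in_cert cS (sens v sv)).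
set t := tt m k.
apply: (card_ge (F := fun j => if j < 2 then j else if j <= t then 2 * ((j-1) * m)
                                 else 2 * ((j - t) * m) + 1)).
  move=> i j hi hj; case: ifP; case: ifP; try case: ifP; try case: ifP; nia.
move=> j hj.
case: ifP => j2.
  have o : j < 2 * k by lia.
  by exists (Ordinal o) => //; rewrite inE /supp /Pos /=; apply/orP; left; lia.
case: ifP => jt.
  have o : 2 * ((j - 1) * m) < 2 * k by nia.
  exists (Ordinal o) => //; rewrite inE /supp /Neg /=; apply/orP; right.
  have -> : (2 * ((j - 1) * m)) %/ 2 = (j - 1) * m by lia.
  have -> : (2 * ((j - 1) * m)) %% 2 = 0 by lia.
  rewrite modnMl mod0n eqxx /= andbT; apply/eqP; nia.
have o : 2 * ((j - t) * m) + 1 < 2 * k by nia.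
exists (Ordinal o) => //; rewrite inE /supp /Neg /=; apply/orP; right.
have -> : (2 * ((j - t) * m) + 1) %/ 2 = (j - t) * m by lia.
rewrite modnMl mod0n eqxx /= mulnK // div0n distE; last 2 first.
- by [].
- lia.
- rewrite -/t; apply/andP; split; first by apply/eqP; nia.
  apply/orP; right; rewrite leq0n; lia.
Qed.


Theorem theorem1 (m k : nat) (hm : 0 < m) (hmk : m <= k) :
  exists (n : nat) (g : input n -> bool),
    [/\ s0 g = m, bs0 g = k &
        C1 g = (3 * ((k + m - 1) %/ m)) %/ 2 + 1].
Proof.
exists (2 * k), (G m k); split; [exact: s0_eq | exact: bs0_eq |].
change ((k + m - 1) %/ m) with (tt m k).
have -> : (3 * tt m k) %/ 2 + 1 = tt m k + tt m k %/ 2 + 1 by lia.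
by apply/eqP; rewrite eqn_leq C1_le // C1_ge.
Qed.
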